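(* Let $\rho$ be a function quasi-norm over a $\sigma$-finite measure space $(\Omega,\Sigma,\mu)$ with the Fatou property, and let $X$ be a Banach space. If $x$ and $x_n$ ($n\in\mathbb{N}$) are measurable functions $\Omega\to X$ with $\lim_n\rho(\|x-x_n\|)=0$ and $\sup_n\|x_n\|\le g$ a.e. for some absolutely continuous $g\in L_0^+(\mu)$ with $\rho(g)<\infty$, then $\lim_n\rho(\|x_n\|)=\rho(\|x\|)$.
   Context: $L_0^+(\mu)$: measurable functions $\Omega\to[0,\infty]$ modulo a.e. equality. A function quasi-norm is $\rho\colon L_0^+(\mu)\to[0,\infty]$ with (F1) $\rho(tf)=t\rho(f)$, $t\ge0$; (F2) $f\le g$ a.e. $\Rightarrow\rho(f)\le\rho(g)$; (F3) $\rho(\chi_E)<\infty$ if $\mu(E)<\infty$; (F4) for all $E$ with $\mu(E)<\infty$ and $\varepsilon>0$ there is $\delta>0$ with $\mu(A)\le\varepsilon$ whenever $A\subseteq E$ measurable and $\rho(\chi_A)\le\delta$; (F5) $\rho(f+g)\le\kappa(\rho(f)+\rho(g))$. Fatou property: $\rho(\lim_nf_n)\le\lim_n\rho(f_n)$ for every non-decreasing $(f_n)$ in $L_0^+(\mu)$. A function $g\in L_0^+(\mu)$ with $\rho(g)<\infty$ is absolutely continuous (w.r.t. $\rho$) if $\lim_n\rho(f_n)=\rho(\lim_nf_n)$ for every non-increasing sequence $(f_n)$ in $L_0^+(\mu)$ with $f_1\le g$. *)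

(* Defs.v *)
From HB Require Import structures.
From mathcomp Require Import all_boot all_order all_algebra.
From mathcomp Require Import all_classical all_reals all_analysis measurable_realfun.
Set Implicit Arguments. Unset Strict Implicit. Unset Printing Implicit Defensive.
Import Order.TTheory GRing.Theory Num.Theory.
Import numFieldNormedType.Exports.
Local Open Scope classical_set_scope.
Local Open Scope ring_scope.
Local Open Scope ereal_scope.

Section FunctionQuasiNorm.
Context {d : measure_display} {T : measurableType d} {R : realType}.
Variable mu : {measure set T -> \bar R}.

(* elements of L_0^+(mu) (representatives): measurable, [0,oo]-valued *)
Definition L0plus (f : T -> \bar R) : Prop :=
  measurable_fun setT f /\ forall t, 0 <= f t.

Definition eindic (A : set T) : T -> \bar R := fun t => (\1_A t)%:E.

(* rho is defined on all functions, but only its values on L0plus matter.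
   (F2) is stated with "a.e." so rho respects a.e.-equality. *)
Definition function_quasi_norm (rho : (T -> \bar R) -> \bar R) : Prop :=
  (forall f, L0plus f -> forall t : R, (0 <= t)%R ->
      rho (fun x => t%:E * f x) = t%:E * rho f) /\
  (forall f g, L0plus f -> L0plus g ->
      {ae mu, forall x, f x <= g x} -> rho f <= rho g) /\
  (forall E, measurable E -> mu E < +oo -> rho (eindic E) < +oo) /\
  (forall E, measurable E -> mu E < +oo -> forall eps : R, (0 < eps)%R ->
      exists2 delta : R, (0 < delta)%R &
        forall A, measurable A -> A `<=` E -> rho (eindic A) <= delta%:E ->
          mu A <= eps%:E) /\
  (exists kappa : R, (1 <= kappa)%R /\
      forall f g, L0plus f -> L0plus g ->
        rho (f \+ g) <= kappa%:E * (rho f + rho g)).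

Definition fatou_property (rho : (T -> \bar R) -> \bar R) : Prop :=
  forall f : nat -> T -> \bar R, (forall n, L0plus (f n)) ->
    (forall n x, f n x <= f n.+1 x) ->
    rho (fun x => limn (fun n => f n x)) <= limn (fun n => rho (f n)).

Definition abs_continuous (rho : (T -> \bar R) -> \bar R) (g : T -> \bar R)
  : Prop :=
  L0plus g /\ rho g < +oo /\
  forall f : nat -> T -> \bar R, (forall n, L0plus (f n)) ->
    (forall n x, f n.+1 x <= f n x) -> (forall x, f 0%N x <= g x) ->
    limn (fun n => rho (f n)) = rho (fun x => limn (fun n => f n x)).

End FunctionQuasiNorm.

Section StrongMeas.
Context {d : measure_display} {T : measurableType d} {R : realType}
  {X : normedModType R}.

Definition simple_function (s : T -> X) : Prop :=
  finite_set (range s) /\ forall y : X, measurable (s @^-1` [set y]).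

(* measurability of X-valued functions: strong measurability,
   i.e. pointwise limit of simple functions *)
Definition strongly_measurable (f : T -> X) : Prop :=
  exists s : nat -> T -> X, (forall k, simple_function (s k)) /\
    forall t, (fun k => s k t) @ \oo --> f t.

Definition enormf (f : T -> X) : T -> \bar R := fun t => (`| f t |)%:E.

End StrongMeas.

(* Main.v *)
Require Import Defs.
From HB Require Import structures.
From mathcomp Require Import all_boot all_order all_algebra.
From mathcomp Require Import all_classical all_reals all_analysis measurable_realfun.

Import Order.TTheory GRing.Theory Num.Theory.
Import numFieldNormedType.Exports.
Local Open Scope classical_set_scope.
Local Open Scope ring_scope.
Local Open Scope ereal_scope.

Definition incr (p : nat -> nat) := forall k, (p k < p k.+1)%N.

Lemma incr_ge {p} : incr p -> forall k, (k <= p k)%N.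
Proof. move=> hp; elim=> // k ih; exact: leq_ltn_trans ih (hp k). Qed.

Lemma incr_mono {p} : incr p -> forall k l, (k <= l)%N -> (p k <= p l)%N.
Proof.
move=> hp k; elim=> [|l ih]; first by rewrite leqn0 => /eqP ->.
rewrite leq_eqVlt => /orP[/eqP -> //|kl].
exact: leq_trans (ih kl) (ltnW (hp l)).
Qed.

Lemma incr_comp p q : incr p -> incr q -> incr (p \o q).
Proof.
move=> hp hq k /=; have h := incr_mono hp _ _ (hq k).
exact: leq_trans (hp (q k)) h.
Qed.

Lemma extract (P : nat -> nat -> Prop) :
  (forall k N, exists n, (N <= n)%N /\ P k n) ->
  exists psi, incr psi /\ forall k, P k (psi k).
Proof.
move=> h.
have [c hc] := choice (fun kN : nat * nat => h kN.1 kN.2).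
pose psi := fix psi k := if k is k'.+1 then c (k'.+1, (psi k').+1) else c (0%N, 0%N).
exists psi; split.
  by move=> k /=; have [+ _] := hc (k.+1, (psi k).+1).
by case=> [|k] /=; [exact: (hc (0,0)%N).2 | exact: (hc (k.+1, _)).2].
Qed.

Lemma subseq_cvg {R : realType} (u : nat -> \bar R) (l : \bar R) p : incr p ->
  u @ \oo --> l -> (u \o p) @ \oo --> l.
Proof.
move=> hp hu; have hp' : p @ \oo --> \oo.
  move=> P [N _ HP]; exists N => // k /= Nk.
  by apply: HP; rewrite /= (leq_trans Nk) // incr_ge.
exact: cvg_comp hp' hu.
Qed.

Section FV.
Context {d : measure_display} {T : measurableType d}.

Definition fv {V : Type} (s : T -> V) :=
  finite_set (range s) /\ forall y : V, measurable (s @^-1` [set y]).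

Lemma fv_preimage {V : Type} (s : T -> V) (B : set V) : fv s -> measurable (s @^-1` B).
Proof.
move=> [fs ms].
have -> : s @^-1` B = \bigcup_(y in range s `&` B) s @^-1` [set y].
  apply/seteqP; split=> [t Bt|t [y [_ By] /= ->//]].
  by exists (s t) => //; split => //; exists t.
by apply: fin_bigcup_measurable => //; exact: finite_setIl.
Qed.

Lemma fv_comp {V W : Type} (G : V -> W) (s : T -> V) : fv s -> fv (G \o s).
Proof.
move=> hs; split.
  apply: sub_finite_set (finite_image G hs.1) => _ [t _ <-].
  by exists (s t) => //; exists t.
by move=> y; rewrite comp_preimage; exact: fv_preimage.
Qed.

Lemma fv_pair {V W : Type} (s : T -> V) (s' : T -> W) : fv s -> fv s' ->
  fv (fun t => (s t, s' t)).
Proof.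
move=> [f1 m1] [f2 m2]; split.
  apply: sub_finite_set (finite_setX f1 f2) => _ [t _ <-].
  by split; exists t.
move=> [u v].
have -> : (fun t => (s t, s' t)) @^-1` [set (u, v)] =
    s @^-1` [set u] `&` s' @^-1` [set v].
  apply/seteqP; split=> t /=; first by case=> -> ->.
  by case=> -> ->.
exact: measurableI.
Qed.

Lemma fv_measurable {R : realType} (s : T -> \bar R) : fv s -> measurable_fun setT s.
Proof. by move=> hs _ B _; rewrite setTI; exact: fv_preimage. Qed.

End FV.

Section Norm.
Context {d : measure_display} {T : measurableType d} {R : realType}
  {X : normedModType R}.

Lemma sm_norm (x y : T -> X) (c : R) :
  strongly_measurable x -> strongly_measurable y ->
  measurable_fun setT (fun t => (`| x t - c *: y t |)%:E).
Proof.
move=> [s [ss sc]] [s' [ss' sc']].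
apply: (@emeasurable_fun_cvg _ _ _ _ (fun k t => (`| s k t - c *: s' k t |)%:E)).
  move=> k; apply: fv_measurable.
  exact: (fv_comp (fun p : X * X => (`|p.1 - c *: p.2|)%:E) _ (fv_pair _ _ (ss k) (ss' k))).
move=> t _; apply: cvg_EFin; first by apply: nearW.
apply: cvg_norm; apply: cvgB; first exact: sc.
by apply: cvgZ; [exact: cvg_cst | exact: sc'].
Qed.

Lemma sm_enormf_diff (x y : T -> X) :
  strongly_measurable x -> strongly_measurable y ->
  measurable_fun setT (enormf (fun t => (x t - y t)%R)).
Proof.
move=> hx hy; have -> : enormf (fun t => (x t - y t)%R) = (fun t => (`|x t - 1 *: y t|)%:E).
  by apply/funext => t; rewrite /enormf scale1r.
exact: sm_norm.
Qed.

Lemma sm_enormf (x : T -> X) :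
  strongly_measurable x -> measurable_fun setT (enormf x).
Proof.
move=> hx; have -> : enormf x = (fun t => (`|x t - 0 *: x t|)%:E).
  by apply/funext => t; rewrite /enormf scale0r subr0.
exact: sm_norm.
Qed.

End Norm.

Section Rho.
Context {d : measure_display} {T : measurableType d} {R : realType}.
Variable mu : {measure set T -> \bar R}.

Lemma rho_ge0 (rho : (T -> \bar R) -> \bar R) : function_quasi_norm mu rho ->
  forall f, L0plus f -> 0 <= rho f.
Proof.
move=> [F1 [F2 _]] f hf.
have h0 : L0plus (fun _ : T => 0 : \bar R).
  by split => //; exact: measurable_cst.
have e0 : rho (fun _ => 0) = 0.
  have -> : (fun _ : T => 0 : \bar R) = (fun x => (0%R)%:E * f x).
    by apply/funext => t; rewrite mul0e.
  by rewrite F1 // mul0e.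
rewrite -e0; apply: F2 => //; apply: aeW => t; exact: hf.2.
Qed.

Lemma ev_lt (u : nat -> \bar R) (c : R) : (0 < c)%R -> u @ \oo --> 0 ->
  exists N, forall n, (N <= n)%N -> u n < c%:E.
Proof.
move=> c0 hu.
have : \forall y \near (0%R)%:E, y < c%:E.
  apply/nbhs_EFin; near=> y; rewrite lte_fin; near: y; exact: lt_nbhsl.
move=> /hu [N _ HN]; exists N => n Nn; exact: HN.
Unshelve. all: by end_near. Qed.


Lemma ae_subseq (rho : (T -> \bar R) -> \bar R) : sigma_finite setT mu ->
  function_quasi_norm mu rho ->
  forall f : nat -> T -> \bar R, (forall k, L0plus (f k)) ->
  (fun k => rho (f k)) @ \oo --> 0 ->
  exists psi, incr psi /\ {ae mu, forall t, forall e : R, (0 < e)%R ->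
     exists K, forall k, (K <= k)%N -> f (psi k) t <= e%:E}.
Proof.
move=> /sigma_finiteP [F [FU Fnd Fm]] hq f hf hc.
have hq' := hq; case: hq' => [F1 [F2 [_ [F4 _]]]].
pose eps k : R := (1 / (2 ^ k.+1)%:R)%R.
have eps0 k : (0 < eps k)%R by rewrite /eps divr_gt0 // ltr0n expn_gt0.
have /choice [del hdel] : forall k, exists del : R, (0 < del)%R /\
    forall A, measurable A -> A `<=` F k -> rho (eindic A) <= del%:E ->
      mu A <= (eps k)%:E.
  move=> k; have [dl dl0 hdl] := F4 (F k) (Fm k).1 (Fm k).2 (eps k) (eps0 k).
  by exists dl.
have [psi [ipsi hpsi]] : exists psi, incr psi /\
    forall k, rho (f (psi k)) <= (del k * eps k)%:E.
  apply: (extract (fun k n => rho (f n) <= (del k * eps k)%:E)) => k N.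
  have [M hM] := ev_lt _ (del k * eps k) (mulr_gt0 (hdel k).1 (eps0 k)) hc.
  exists (maxn N M); split; first exact: leq_maxl.
  by apply: ltW; apply: hM; exact: leq_maxr.
exists psi; split => //.
pose A k := F k `&` [set t | (eps k)%:E < f (psi k) t].
have mA k : measurable (A k).
  apply: measurableI; first exact: (Fm k).1.
  have := (hf (psi k)).1 measurableT _ (emeasurable_itv `](eps k)%:E, +oo[).
  rewrite setTI; congr measurable; apply/seteqP; split => t /=;
    by rewrite in_itv /= andbT.
have muA k : mu (A k) <= (eps k)%:E.
  apply: (hdel k).2 (mA k) (@subIsetl _ _ _) _.
  have Lind : L0plus (@eindic _ _ R (A k)).
    split; first exact/measurable_EFinP/measurable_indic.
    by move=> t; rewrite /eindic lee_fin indicE.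
  have ie0 : (0 <= (eps k)^-1)%R by rewrite invr_ge0 ltW.
  have Lsc : L0plus (fun t => ((eps k)^-1)%:E * f (psi k) t).
    split; first exact: measurable_funeM (hf _).1.
    by move=> t; apply: mule_ge0; [rewrite lee_fin | exact: (hf _).2].
  have hle : rho (eindic (A k)) <= rho (fun t => ((eps k)^-1)%:E * f (psi k) t).
    apply: (F2 _ _ Lind Lsc).
    apply: aeW => t; rewrite /eindic indicE.
    case: (boolP (t \in A k)) => [/set_mem [_ /= h]|_]; last first.
      by rewrite /= mule_ge0 // ?lee_fin // (hf _).2.
    move: h; case: (f (psi k) t) => [r||] //= h.
      rewrite lte_fin in h; rewrite -EFinM lee_fin.
      rewrite -[X in (X <= _)%R](mulVf (negbT (gt_eqF (eps0 k)))).
      by rewrite ler_pM2l ?invr_gt0 // ltW.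
    by rewrite gt0_muley ?lte_fin ?invr_gt0 // leey.
  apply: (le_trans hle); rewrite (F1 _ (hf _) _ ie0).
  apply: le_trans (lee_wpmul2l _ (hpsi k)) _; first by rewrite lee_fin.
  by rewrite -EFinM mulrCA mulVf ?mulr1 // (negbT (gt_eqF (eps0 k))).
have BC : mu (lim_sup_set A) = 0.
  apply: lim_sup_set_cvg0 => //.
  apply: (@le_lt_trans _ _ (\sum_(0 <= k <oo) (eps k)%:E)).
    apply: lee_nneseries => n *; [exact: measure_ge0 | exact: muA].
  apply: le_lt_trans (epsilon_trick0 xpredT ler01) _; exact: ltry.
exists (lim_sup_set A); split => //.
  by apply: bigcap_measurable => // k _; exact: bigcup_measurable.
move=> t Pt; apply: contrapT => nL; apply: Pt => e e0.
have [n hn] : exists n, forall j, (n <= j)%N -> ~ A j t.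
  apply: contrapT => h; apply: nL => n _; apply: contrapT => h2.
  apply: h; exists n => j nj Aj; apply: h2; by exists j.
have [i Fi] : exists i, F i t.
  by have : setT t by []; rewrite FU => -[i _ Fi]; exists i.
have epsle j K : (K <= j)%N -> (eps j <= eps K)%R.
  move=> Kj; rewrite /eps !div1r lef_pV2 ?posrE ?ltr0n ?expn_gt0 //.
  by rewrite ler_nat leq_exp2l // ltnS.
have [K hK] : exists K, (eps K <= e)%R.
  exists (Num.Def.archi_bound e^-1).
  have ie : (0 <= e^-1)%R by rewrite invr_ge0 ltW.
  have hb := archi_boundP ie.
  rewrite /eps div1r -[e]invrK lef_pV2 ?posrE ?invr_gt0 ?ltr0n ?expn_gt0 //.
  apply: ltW; apply: lt_le_trans hb _; rewrite ler_nat.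
  apply: ltnW; apply: leq_trans (ltn_expl _ (ltnSn 1)) _.
  by rewrite !invrK leq_exp2l.
exists (maxn (maxn n i) K) => j.
rewrite !geq_max => /andP[/andP[hnj hij] hKj].
have Fj : F j t by move/subsetPset: (Fnd i j hij); apply.
have nA := hn j hnj.
apply: (@le_trans _ _ (eps j)%:E); last first.
  by rewrite lee_fin; apply: le_trans (epsle j K hKj) hK.
rewrite leNgt; apply/negP => h; apply: nA; by split.
Qed.

End Rho.

Theorem proposition3p33 (d : measure_display) (T : measurableType d)
  (R : realType) (mu : {measure set T -> \bar R})
  (rho : (T -> \bar R) -> \bar R) (X : completeNormedModType R)
  (x : T -> X) (xn : nat -> T -> X) (g : T -> \bar R) :
  sigma_finite setT mu ->
  function_quasi_norm mu rho ->
  fatou_property rho ->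
  strongly_measurable x ->
  (forall n, strongly_measurable (xn n)) ->
  (fun n => rho (enormf (fun t => (x t - xn n t)%R))) @ \oo --> 0 ->
  abs_continuous rho g ->
  {ae mu, forall t, forall n, (`| xn n t |%R)%:E <= g t} ->
  (fun n => rho (enormf (xn n))) @ \oo --> rho (enormf x).
Proof.
move=> sf hq hF smx smxn hc [Lg [rgfin hac]] hae.
have hq' := hq; case: hq' => [F1 [F2 _]].
pose a0 := enormf x. pose a n := enormf (xn n).
pose h n := enormf (fun t => (x t - xn n t)%R).
have La0 : L0plus a0 by split; [exact: sm_enormf | move=> t; rewrite /a0 /enormf lee_fin].
have La n : L0plus (a n) by split; [exact: sm_enormf | move=> t; rewrite /a /enormf lee_fin].
have Lh n : L0plus (h n).
  by split; [exact: sm_enormf_diff | move=> t; rewrite /h /enormf lee_fin].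
have tri1 n t : (`|x t| <= `|xn n t| + `|(x t - xn n t)%R|)%R.
  by have := ler_normD (xn n t) (x t - xn n t)%R; rewrite [(xn n t + _)%R]addrC subrK.
have tri2 n t : (`|xn n t| <= `|x t| + `|(x t - xn n t)%R|)%R.
  by have := ler_normB (x t) (x t - xn n t)%R; rewrite opprB addrCA subrr addr0.
have [psi0 [_ Hae0]] := ae_subseq mu rho sf hq h Lh hc.
have a0g : {ae mu, forall t, a0 t <= g t}.
  apply: filterS2 hae Hae0 => t h1 h2.
  apply/lee_addgt0Pr => e e0; have [K HK] := h2 e e0.
  apply: le_trans (leeD (h1 (psi0 K)) (HK K (leqnn K))).
  rewrite /a0 /a /h /enormf -EFinD lee_fin; exact: tri1.
have rfin : rho a0 \is a fin_num.
  rewrite ge0_fin_numE; last exact: rho_ge0 hq _ La0.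
  exact: le_lt_trans (F2 _ _ La0 Lg a0g) rgfin.
set r := fine (rho a0).
have hr : rho a0 = r%:E by rewrite /r fineK.
have C : forall phi, incr phi -> forall e : R, (0 < e)%R -> exists k,
    (r - e)%:E < rho (a (phi k)) /\ rho (a (phi k)) < (r + e)%:E.
  move=> phi hphi e e0.
  have [psi [hpsi Hae]] := ae_subseq mu rho sf hq (fun k => h (phi k))
    (fun k => Lh _) (subseq_cvg _ _ _ hphi hc).
  pose m k := phi (psi k).
  have Hgood : {ae mu, forall t, (forall n, a n t <= g t) /\
      (forall e', (0 < e')%R -> exists K, forall k, (K <= k)%N ->
         (`|(x t - xn (m k) t)%R| <= e')%R)}.
    apply: filterS2 hae Hae => t h1 h2; split; first exact: h1.
    move=> e' e'0.
    have [K HK] := h2 e' e'0; exists K => k Kk; rewrite -lee_fin; exact: HK.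
  pose b k := a (m k).
  pose l n t := einfs (fun k => b k t) n.
  have lmono t : {homo (fun n => l n t) : n m / (n <= m)%N >-> n <= m}.
    exact: nondecreasing_einfs.
  have Ll n : L0plus (l n).
    split; first exact: measurable_fun_einfs (fun k => (La (m k)).1) n.
    move=> t; apply: le_ereal_inf_tmp => _ [k _ <-]; exact: (La _).2.
  have Fat := hF l Ll (fun n t => lmono t n n.+1 (leqnSn n)).
  have Llim : L0plus (fun t => limn (fun n => l n t)).
    split.
      apply: (@emeasurable_fun_cvg _ _ _ _ l) => [n|t _]; first exact: (Ll n).1.
      exact: ereal_nondecreasing_is_cvgn (lmono t).
    move=> t; apply: lime_ge; first exact: ereal_nondecreasing_is_cvgn (lmono t).
    by apply: nearW => n; exact: (Ll n).2.
  have low1 : rho a0 <= rho (fun t => limn (fun n => l n t)).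
    apply: F2 => //; apply: filterS Hgood => t [_ H].
    apply/lee_addgt0Pr => e' e'0; have [K HK] := H e' e'0.
    have : (`|x t| - e')%:E <= limn (fun n => l n t).
      apply: lime_ge; first exact: ereal_nondecreasing_is_cvgn (lmono t).
      exists K => // n Kn; apply: le_trans (lmono t _ _ Kn).
      apply: le_ereal_inf_tmp => _ [k /= Kk <-].
      rewrite /b /a /enormf lee_fin lerBlDr.
      apply: le_trans (tri1 (m k) t) _; rewrite lerD2l; exact: HK.
    by rewrite EFinB leeBlDr.
  have rlmono : {homo (fun n => rho (l n)) : n m / (n <= m)%N >-> n <= m}.
    move=> n n' nn'; apply: F2 => //; apply: aeW => t; exact: lmono.
  have [n1 Hn1] : exists n1, (r - e)%:E < rho (l n1).
    have hlt : (r - e)%:E < limn (fun n => rho (l n)).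
      apply: lt_le_trans Fat; apply: lt_le_trans low1.
      by rewrite hr lte_fin ltrBlDr ltrDl.
    apply: contrapT => nex.
    have : limn (fun n => rho (l n)) <= (r - e)%:E.
      apply: lime_le; first exact: ereal_nondecreasing_is_cvgn rlmono.
      apply: nearW => n; rewrite leNgt; apply/negP => hh; apply: nex; by exists n.
    by rewrite leNgt hlt.
  pose u n t := mine (g t) (esups (fun k => b k t) n).
  have smono t : {homo (fun n => esups (fun k => b k t) n) : n m / (n <= m)%N >-> m <= n}.
    exact: nonincreasing_esups.
  have umono t : {homo (fun n => u n t) : n m / (n <= m)%N >-> m <= n}.
    move=> n n' nn'; rewrite /u le_min !ge_min lexx /= (smono t _ _ nn').
    by rewrite orbT.
  have Lu n : L0plus (u n).
    split; first exact: measurable_mine Lg.1 (measurable_fun_esups (fun k => (La (m k)).1) n).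
    move=> t; rewrite /u le_min Lg.2 /=.
    apply: le_trans ((La (m n)).2 t) _; rewrite /esups /=; apply: le_ereal_sup_tmp.
    by exists (a (m n) t) => //; exists n => //=; rewrite leqnn.
  have u0g t : u 0%N t <= g t by rewrite /u ge_min lexx.
  have hac' := hac u Lu (fun n t => umono t n n.+1 (leqnSn n)) u0g.
  have Lulim : L0plus (fun t => limn (fun n => u n t)).
    split.
      apply: (@emeasurable_fun_cvg _ _ _ _ u) => [n|t _]; first exact: (Lu n).1.
      exact: ereal_nonincreasing_is_cvgn (umono t).
    move=> t; apply: lime_ge; first exact: ereal_nonincreasing_is_cvgn (umono t).
    by apply: nearW => n; exact: (Lu n).2.
  have up1 : rho (fun t => limn (fun n => u n t)) <= rho a0.
    apply: F2 => //; apply: filterS Hgood => t [_ H].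
    apply/lee_addgt0Pr => e' e'0; have [K HK] := H e' e'0.
    apply: lime_le; first exact: ereal_nonincreasing_is_cvgn (umono t).
    exists K => // n Kn; apply: le_trans (umono t _ _ Kn) _.
    rewrite /u ge_min; apply/orP; right.
    apply: ge_ereal_sup => _ [k /= Kk <-].
    rewrite /b /a /a0 /enormf -EFinD lee_fin.
    apply: le_trans (tri2 (m k) t) _; rewrite lerD2l; exact: HK.
  have rumono : {homo (fun n => rho (u n)) : n m / (n <= m)%N >-> m <= n}.
    move=> n n' nn'; apply: F2 => //; apply: aeW => t; exact: umono.
  have [n2 Hn2] : exists n2, rho (u n2) < (r + e)%:E.
    have hlt : limn (fun n => rho (u n)) < (r + e)%:E.
      rewrite hac'; apply: le_lt_trans up1 _.
      by rewrite hr lte_fin ltrDl.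
    apply: contrapT => nex.
    have : (r + e)%:E <= limn (fun n => rho (u n)).
      apply: lime_ge; first exact: ereal_nonincreasing_is_cvgn rumono.
      apply: nearW => n; rewrite leNgt; apply/negP => hh; apply: nex; by exists n.
    by rewrite leNgt hlt.
  exists (psi (maxn n1 n2)); split.
    apply: lt_le_trans Hn1 _; apply: le_trans (rlmono _ _ (leq_maxl n1 n2)) _.
    apply: F2 => //; apply: aeW => t; rewrite /l /einfs /=; apply: ge_ereal_inf.
    by exists (a (m (maxn n1 n2)) t) => //; exists (maxn n1 n2) => //=; rewrite leqnn.
  apply: le_lt_trans Hn2; apply: le_trans _ (rumono _ _ (leq_maxr n1 n2)).
  apply: F2 => //; apply: filterS Hgood => t [Hg _].
  rewrite /u le_min Hg /= /esups /=; apply: le_ereal_sup_tmp.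
  by exists (a (m (maxn n1 n2)) t) => //; exists (maxn n1 n2) => //=; rewrite leqnn.
have D : forall e : R, (0 < e)%R -> exists N, forall n, (N <= n)%N ->
    (r - e)%:E < rho (a n) /\ rho (a n) < (r + e)%:E.
  move=> e e0; apply: contrapT => nex.
  have hP : forall k N : nat, exists n, (N <= n)%N /\
      ~ ((r - e)%:E < rho (a n) /\ rho (a n) < (r + e)%:E).
    move=> _ N; apply: contrapT => hN; apply: nex; exists N => n Nn.
    apply: contrapT => hn; apply: hN; by exists n.
  have [phi [hphi Hphi]] := extract _ hP.
  have [k Hk] := C phi hphi e e0; exact: Hphi k Hk.
change ((fun n => rho (a n)) @ \oo --> rho a0).
rewrite hr; apply/fine_cvgP; split.
  have [N HN] := D 1%R ltr01; exists N => // n Nn; have [h1 h2] := HN n Nn.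
  by rewrite ge0_fin_numE ?(rho_ge0 mu rho hq _ (La n)) // (lt_trans h2) ?ltry.
apply/cvgrPdist_lt => e e0; have [N HN] := D e e0; exists N => // n Nn /=.
have [h1 h2] := HN n Nn.
move: h1 h2; case: (rho (a n)) => [y||] //= h1 h2.
rewrite lte_fin in h1 h2; rewrite ltr_distlC; apply/andP; split => //.
Qed.
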